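(* The infinite words $\mathbf{t}_{3/2}$ and $\mathbf{t}'$ are uniformly recurrent.
   Context: Base-$3/2$ expansions: $\langle 0\rangle_{3/2}$ is the empty word, and for $n\ge 1$, writing $2n=3m+d$ with integers $m\ge 0$, $d\in\{0,1,2\}$, one sets $\langle n\rangle_{3/2}=\langle m\rangle_{3/2}\,d$. The Thue--Morse word in base $3/2$ is $\mathbf{t}_{3/2}=(t_n)_{n\ge0}\in\{0,1\}^{\mathbb{N}}$ where $t_n$ is the sum of the digits of $\langle n\rangle_{3/2}$ modulo $2$; equivalently the unique binary sequence with $t_0=0$, $t_{3n}=t_{3n+1}=t_{2n}$, $t_{3n+2}=1-t_{2n+1}$ for all $n\ge 0$. Dekking's word $\mathbf{t}'=(x_n)_{n\ge0}$ is the unique binary infinite word with $x_0=0$ satisfying $\mathbf{t}'=\beta(x_0x_1)\beta(x_2x_3)\beta(x_4x_5)\cdots$, where $\beta(00)=\beta(01)=010$ and $\beta(10)=\beta(11)=101$; it begins $0100101011011010101011011\cdots$. An infinite word is uniformly recurrent if every finite factor of it occurs infinitely often with bounded gaps, i.e. for every factor $u$ there is $L$ such that every factor of length $L$ contains $u$. *)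

(* Defs.v *)
From mathcomp Require Import all_boot.
Set Implicit Arguments. Unset Strict Implicit. Unset Printing Implicit Defensive.

(* Implemented with fuel: since
   m = 2n %/ 3 <= n - 1 for n >= 1, fuel n is always sufficient. *)
Fixpoint exp32_aux (fuel n : nat) : seq nat :=
  match fuel with
  | 0 => [::]
  | f.+1 => if n is 0 then [::]
            else rcons (exp32_aux f (n.*2 %/ 3)) (n.*2 %% 3)
  end.

Definition exp32 (n : nat) : seq nat := exp32_aux n n.

Definition t32 (n : nat) : bool := odd (sumn (exp32 n)).

Definition beta (a b : bool) : seq bool :=
  if a then [:: true; false; true] else [:: false; true; false].

(* x is a Dekking word: x_0 = 0 and x = beta(x0 x1) beta(x2 x3) ...,
   i.e. the block x_{3k} x_{3k+1} x_{3k+2} equals beta(x_{2k} x_{2k+1}). *)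
Definition dekking (x : nat -> bool) : Prop :=
  x 0 = false /\
  forall k, [:: x (3 * k); x (3 * k + 1); x (3 * k + 2)] = beta (x (2 * k)) (x (2 * k).+1).

Definition factor (w : nat -> bool) (i l : nat) : seq bool :=
  [seq w (i + j) | j <- iota 0 l].

Definition uniformly_recurrent (w : nat -> bool) : Prop :=
  forall i l, exists L, forall p, exists q,
    p <= q /\ q + l <= p + L /\ factor w q l = factor w i l.

(* Main.v *)
Require Import Defs.
From mathcomp Require Import all_boot zify.

Lemma aux_fuel f g n : n <= f -> n <= g -> exp32_aux f n = exp32_aux g n.
Proof.
elim: f g n => [|f IH] [|g] [|n] //= Hf Hg.
congr rcons; apply: IH; lia.
Qed.

Lemma tS n : t32 n = t32 (n.*2 %/ 3) (+) odd (n.*2 %% 3).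
Proof.
case: n => [|n] //.
rewrite /t32 /exp32 /= sumn_rcons oddD; congr (odd (sumn _) (+) _).
apply: aux_fuel; lia.
Qed.

Definition m1 y := y.*2 %/ 3.

Lemma L1 K : forall x y, iter K m1 y = 0 ->
  t32 (3 ^ K * x + y) = t32 y (+) t32 (2 ^ K * x).
Proof.
elim: K => [|K IH] x y.
  by move=> /= ->; rewrite !expn0 !mul1n addn0.
rewrite iterSr => Hy.
rewrite tS (tS y).
have -> : (3 ^ K.+1 * x + y).*2 = (3 ^ K * (2 * x)) * 3 + y.*2.
  rewrite expnS; lia.
rewrite divnMDl // modnMDl IH // (_ : 2 ^ K * (2 * x) = 2 ^ K.+1 * x); last by rewrite expnS; lia.
by rewrite /m1; case: (t32 _); case: (t32 _); case: (odd _).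
Qed.
Lemma mK_bound K : forall y, 3 ^ K * iter K m1 y <= 2 ^ K * y.
Proof.
elim: K => [|K IH] y; first by rewrite /= !mul1n.
rewrite iterSr.
have H1 := IH (m1 y).
have H2 : 3 * m1 y <= y.*2 by rewrite /m1 mulnC leq_trunc_div.
rewrite !expnS.
have H3 : 2 ^ K * (3 * m1 y) <= 2 ^ K * y.*2 by rewrite leq_mul2l H2 orbT.
nia.
Qed.

Lemma m0 K y : y * 2 ^ K < 3 ^ K -> iter K m1 y = 0.
Proof.
move=> H; have := mK_bound K y.
case: (iter K m1 y) => // k; nia.
Qed.

Lemma existsK N : exists K, N * 2 ^ K < 3 ^ K.
Proof.
elim: N => [|N [K HK]]; first by exists 0.
exists K.+2; rewrite !expnS.
have : 2 ^ K <= 3 ^ K by case: (K) => // k; rewrite leq_exp2r.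
nia.
Qed.

Lemma shiftL N K x y : N * 2 ^ K < 3 ^ K -> y < N ->
  t32 (3 ^ K * x + y) = t32 y (+) t32 (2 ^ K * x).
Proof.
move=> HN Hy; apply: L1; apply: m0.
have : y * 2 ^ K <= N * 2 ^ K by rewrite leq_mul2r ltnW ?orbT.
lia.
Qed.

Lemma anti K : 2 * 2 ^ K < 3 ^ K -> exists x, t32 (2 ^ K * x) = true.
Proof.
move=> HK.
have K0 : 0 < K by case: K HK.
set P := (3 ^ K + 1) ^ K.
have HP : P %% 3 ^ K = 1.
  rewrite /P -modnXm addnC modnDr modnXm exp1n modn_small //.
  by rewrite -{1}(expn0 3) ltn_exp2l.
have Hd : 2 ^ K %| P.
  apply: dvdn_exp2r; rewrite dvdn2 oddD oddX orbT /=.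
  by case: (K) K0.
case/dvdnP: Hd => j Hj.
have E : 2 ^ K * (2 * j) = 3 ^ K * (2 * (P %/ 3 ^ K)) + 2.
  have e := divn_eq P (3 ^ K); rewrite HP in e.
  move: (P %/ 3 ^ K) e => D e.
  rewrite Hj in e; lia.
have I2 : iter K m1 2 = 0 by apply: m0; lia.
have H := @L1 K (2 * (P %/ 3 ^ K)) 2 I2.
rewrite -E in H.
have T2 : t32 2 = true by vm_compute.
rewrite T2 in H.
case E2 : (t32 (2 ^ K * (2 * (P %/ 3 ^ K)))).
  by exists (2 * (P %/ 3 ^ K)).
by exists (2 * j); rewrite H E2.
Qed.

Lemma factorP (w : nat -> bool) q i l :
  (forall j, j < l -> w (q + j) = w (i + j)) -> factor w q l = factor w i l.
Proof.
move=> H; apply/eq_in_map => j; rewrite mem_iota add0n => Hj; exact: H.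
Qed.

Lemma factorE (w : nat -> bool) q i l : factor w q l = factor w i l ->
  forall j, j < l -> w (q + j) = w (i + j).
Proof.
move=> H j Hj.
have := congr1 (nth false) H => /(congr1 (fun f => f j)).
by rewrite !(nth_map 0) ?size_iota // nth_iota.
Qed.

Lemma t32_ur : uniformly_recurrent t32.
Proof.
move=> i l.
set N := i + l + 2.
have [K HK] := existsK N.
have [x1 Hx1] : exists x, t32 (2 ^ K * x) = true.
  apply: anti.
  have : 2 * 2 ^ K <= N * 2 ^ K by rewrite leq_mul2r /N; lia.
  lia.
set S1 := 3 ^ K * x1.
have anti1 : forall y, y < N -> t32 (S1 + y) = ~~ t32 y.
  by move=> y Hy; rewrite /S1 (shiftL _ _ x1 _ HK Hy) Hx1 addbT.
have [K' HK'] := existsK (N + S1).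
exists (3 ^ K' + S1 + i + l) => p.
set x2 := p %/ 3 ^ K' + 1.
have P3 : 0 < 3 ^ K' by rewrite expn_gt0.
have Hx2a : p < 3 ^ K' * x2.
  rewrite /x2 mulnDr muln1 mulnC.
  by rewrite {1}(divn_eq p (3 ^ K')) ltn_add2l ltn_pmod.
have Hx2b : 3 ^ K' * x2 <= p + 3 ^ K'.
  rewrite /x2 mulnDr muln1 mulnC leq_add2r.
  by rewrite {2}(divn_eq p (3 ^ K')) leq_addr.
have sh2 : forall y, y < N + S1 -> t32 (3 ^ K' * x2 + y) = t32 y (+) t32 (2 ^ K' * x2).
  by move=> y Hy; apply: (shiftL _ _ _ _ HK' Hy).
clearbody x2 S1.
case E : (t32 (2 ^ K' * x2)).
- exists (3 ^ K' * x2 + S1 + i); split; [lia | split; [lia|]].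
  apply: factorP => j Hj.
  rewrite -!addnA sh2; last by rewrite /N; lia.
  rewrite E addbT anti1 ?negbK //; rewrite /N; lia.
- exists (3 ^ K' * x2 + i); split; [lia | split; [lia|]].
  apply: factorP => j Hj.
  rewrite -!addnA sh2; last by rewrite /N; lia.
  by rewrite E addbF.
Qed.

Definition dk (n : nat) : bool := t32 (n %/ 3) (+) (n %% 3 == 1).

Lemma odd3 r : r < 3 -> odd r = (r == 1).
Proof. by case: r => [|[|[|]]]. Qed.

Lemma dk_ur w : (forall n, w n = dk n) -> uniformly_recurrent w.
Proof.
move=> Hw i l.
have [L' HL] := t32_ur (i %/ 3) (l %/ 3 + 2).
exists (3 * L' + 3) => p.
have [q' [h1 [h2 h3]]] := HL (p %/ 3 + 1).
exists (3 * q' + i %% 3); split; first lia.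
split; first lia.
apply: factorP => j Hj.
rewrite !Hw /dk.
have e1 : (3 * q' + i %% 3 + j) %/ 3 = q' + (i %% 3 + j) %/ 3 by lia.
have e2 : (i + j) %/ 3 = i %/ 3 + (i %% 3 + j) %/ 3 by lia.
have e3 : (3 * q' + i %% 3 + j) %% 3 = (i + j) %% 3 by lia.
rewrite e1 e2 e3 (factorE _ _ _ _ h3) //; lia.
Qed.

Lemma blk x k : dekking x ->
  [/\ x (3 * k) = x (2 * k), x (3 * k + 1) = ~~ x (2 * k) & x (3 * k + 2) = x (2 * k)].
Proof.
case=> _ H; have := H k; rewrite /beta.
by case: (x (2 * k)) => [[-> -> ->]|[-> -> ->]].
Qed.

Lemma dek_t x : dekking x -> forall n, x n = dk n.
Proof.
move=> D.
have xr : forall q r, r < 3 -> x (3 * q + r) = x (3 * q) (+) (r == 1).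
  move=> q r Hr; case: (@blk x q D) => h0 h1 h2.
  case: r Hr => [|[|[|]]] // _.
  - by rewrite addn0 addbF.
  - by rewrite h1 h0 addbT.
  - by rewrite h2 h0 addbF.
have H3 : forall n, x (3 * n) = t32 n.
  elim/ltn_ind => n IH.
  case: n IH => [|n] IH; first by case: D.
  case: (@blk x n.+1 D) => -> _ _.
  rewrite tS -mul2n.
  have e : 2 * n.+1 = 3 * ((2 * n.+1) %/ 3) + (2 * n.+1) %% 3 by rewrite [3 * _]mulnC -divn_eq.
  rewrite {1}e xr ?ltn_pmod // IH; last lia.
  by rewrite odd3 ?ltn_pmod.
move=> n.
have e : n = 3 * (n %/ 3) + n %% 3 by rewrite [3 * _]mulnC -divn_eq.
by rewrite {1}e xr ?ltn_pmod // H3.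
Qed.

Lemma dk_dek : dekking dk.
Proof.
split; first by vm_compute.
move=> k.
have e : forall r, r < 3 -> dk (3 * k + r) = t32 k (+) (r == 1).
  move=> r Hr; rewrite /dk.
  have -> : (3 * k + r) %/ 3 = k by lia.
  by have -> : (3 * k + r) %% 3 = r by lia.
rewrite (e 1) // (e 2) //.
have := e 0; rewrite addn0 => -> //.
have -> : dk (2 * k) = t32 k.
  rewrite /dk (tS k) -mul2n odd3 ?ltn_pmod //.
rewrite /beta; by case: (t32 k).
Qed.

Theorem corollary13 :
  uniformly_recurrent t32 /\
  (exists x, dekking x) /\
  (forall x, dekking x -> uniformly_recurrent x).
Proof.
split; first exact: t32_ur.
split; first by exists dk; exact: dk_dek.
move=> x D; apply: dk_ur; exact: dek_t.
Qed.
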